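(* There exists a constant $c>0$ such that for infinitely many integers $r\ge1$, there is a $1$-gap planar graph $G$ with radius at most $r$ and treewidth $\mathrm{tw}(G)\ge 2^{cr}$.
   Context: Graphs are finite, simple, undirected. An embedded graph has vertices as distinct points of $\mathbb{R}^2$ and each edge $uv$ as a curve with endpoints $u,v$ containing no vertex in its interior; a crossing is a point common to two edges other than their endpoints. An embedded graph is $k$-gap planar if every crossing can be charged to one of the two edges involved so that at most $k$ crossings are charged to each edge; a graph is $k$-gap planar if it is isomorphic to a $k$-gap planar embedded graph. *)

(* Defs.v *)
From Stdlib Require Import Reals List.
From mathcomp Require Import all_boot.
Set Implicit Arguments.
Unset Strict Implicit.
Unset Printing Implicit Defensive.

Definition point := (R * R)%type.

Definition simple_graph (T : finType) (e : rel T) : Prop :=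
  symmetric e /\ irreflexive e.

(* The curve of uv is parametrised by [0,1]; curve v u is the
   reversed curve of curve u v, so each (unordered) edge has one curve. *)
Definition embedding (T : finType) (e : rel T) (pos : T -> point)
    (curve : T -> T -> R -> point) : Prop :=
  injective pos /\
  (forall u v, e u v ->
     continuity (fun t => fst (curve u v t)) /\
     continuity (fun t => snd (curve u v t)) /\
     curve u v R0 = pos u /\ curve u v R1 = pos v /\
     (forall t, curve u v t = curve v u (Rminus R1 t)) /\
     (forall t w, Rlt R0 t /\ Rlt t R1 -> curve u v t <> pos w)).

Definition on_edge (T : finType) (curve : T -> T -> R -> point) (u v : T) (p : point) : Prop :=
  exists t, Rle R0 t /\ Rle t R1 /\ curve u v t = p.

Definition crossing (T : finType) (e : rel T) (pos : T -> point)
    (curve : T -> T -> R -> point) (p : point) (u v x y : T) : Prop :=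
  e u v /\ e x y /\ [set u; v] <> [set x; y] /\
  on_edge curve u v p /\ on_edge curve x y p /\
  p <> pos u /\ p <> pos v /\ p <> pos x /\ p <> pos y.

(* k-gap planar embedded graph: every crossing (a point p together with the
   unordered pair of edges involved) is charged to one of its two edges, and
   every edge receives at most k charges. chg E lists the crossings charged to
   the edge E (each recorded as the crossing point and the other edge). *)
Definition gap_planar_embedding (T : finType) (e : rel T) (k : nat)
    (pos : T -> point) (curve : T -> T -> R -> point) : Prop :=
  exists chg : {set T} -> seq (point * {set T}),
    (forall E, size (chg E) <= k) /\
    (forall p u v x y, crossing e pos curve p u v x y ->
       List.In (p, [set x; y]) (chg [set u; v]) \/
       List.In (p, [set u; v]) (chg [set x; y])).

Definition gap_planar (T : finType) (e : rel T) (k : nat) : Prop :=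
  exists pos curve, embedding e pos curve /\ gap_planar_embedding e k pos curve.

Definition radius_le (T : finType) (e : rel T) (r : nat) : Prop :=
  exists c : T, forall w : T, exists p : seq T,
    size p <= r /\ path e c p /\ last c p = w.

Definition tree (I : finType) (t : rel I) : Prop :=
  simple_graph t /\ 0 < #|I| /\
  (forall i j : I, connect t i j) /\
  (forall (x : I) (p : seq I),
     ~ (2 <= size p /\ uniq (x :: p) /\ path t x p /\ t (last x p) x)).

Definition tree_decomposition (T I : finType) (e : rel T) (t : rel I)
    (B : I -> {set T}) : Prop :=
  tree t /\
  (forall v : T, exists i, v \in B i) /\
  (forall u v : T, e u v -> exists i, (u \in B i) && (v \in B i)) /\
  (forall v : T, forall i j : I, v \in B i -> v \in B j ->
     connect [rel a b | [&& t a b, v \in B a & v \in B b]] i j).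

Definition width (T I : finType) (B : I -> {set T}) : nat :=
  (\max_(i : I) #|B i|).-1.

Definition treewidth_ge (T : finType) (e : rel T) (x : R) : Prop :=
  forall (I : finType) (t : rel I) (B : I -> {set T}),
    tree_decomposition e t B -> Rle x (INR (width B)).

(* Main.v *)
Require Import Defs.
From Stdlib Require Import Reals List Lra Psatz.
From mathcomp Require Import all_boot zify.
Set Implicit Arguments.
Unset Strict Implicit.
Unset Printing Implicit Defensive.

Definition darc (m a b : nat) : bool :=
  [exists l : 'I_m.+1, (2 ^ l %| a) && (b == a + 2 ^ l)].

Lemma darcP m a b : reflect (exists l, [/\ l <= m, 2 ^ l %| a & b = a + 2 ^ l]) (darc m a b).
Proof.
apply: (iffP existsP) => [[l /andP [h1 /eqP h2]]|[l [h0 h1 h2]]].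
  by exists l; split => //; rewrite -ltnS.
have h0' : l < m.+1 by []. by exists (Ordinal h0'); rewrite /= h1 h2 eqxx.
Qed.

Lemma darc_lt m a b : darc m a b -> a < b.
Proof. case/darcP => l [_ _ ->]; rewrite -addn1 leq_add2l expn_gt0. by []. Qed.

Lemma lam_aux l l' a c : l <= l' -> 2 ^ l %| a -> 2 ^ l' %| c ->
  [\/ a + 2 ^ l <= c, c + 2 ^ l' <= a, (c <= a /\ a + 2 ^ l <= c + 2 ^ l') | False].
Proof.
move=> hl /dvdnP [x ->] /dvdnP [y ->].
have ep : 2 ^ l' = 2 ^ (l' - l) * 2 ^ l by rewrite -expnD subnK.
rewrite ep; set P := 2 ^ l; set q := 2 ^ (l' - l).
have Pp : 0 < P by rewrite expn_gt0.
case: (ltnP x (y * q)) => h1.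
  apply: Or41; rewrite -[x * P + P]mulSnr mulnA leq_pmul2r //.
case: (ltnP x (y * q + q)) => h2.
  apply: Or43; split; first by rewrite mulnA leq_pmul2r.
  rewrite -[x * P + P]mulSnr mulnA -mulnDl leq_pmul2r //.
apply: Or42; rewrite mulnA -mulnDl leq_pmul2r //.
Qed.

Lemma darc_lam m a b c d : darc m a b -> darc m c d ->
  [\/ b <= c, d <= a, (a <= c /\ d <= b) | (c <= a /\ b <= d)].
Proof.
case/darcP => l [_ hl ->]; case/darcP => l' [_ hl' ->].
case: (leqP l l') => hll.
  case: (lam_aux hll hl hl') => [h|h|[h1 h2]|//]; [exact: Or41|exact: Or42|exact: Or44].
case: (lam_aux (ltnW hll) hl' hl) => [h|h|[h1 h2]|//]; [exact: Or42|exact: Or41|exact: Or43].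
Qed.

Definition kap (j l : nat) := (j %% 2 ^ l) * (2 ^ l - j %% 2 ^ l).

Lemma kap0 j : kap j 0 = 0.
Proof. by rewrite /kap expn0 modn1. Qed.

Lemma mod_next j l : j %% 2 ^ l.+1 = j %% 2 ^ l \/ j %% 2 ^ l.+1 = j %% 2 ^ l + 2 ^ l.
Proof.
have d : 2 ^ l %| 2 ^ l.+1 by rewrite expnS dvdn_mull.
have hm : j %% 2 ^ l.+1 %% 2 ^ l = j %% 2 ^ l by rewrite modn_dvdm.
have lt : j %% 2 ^ l.+1 < 2 ^ l.+1 by rewrite ltn_mod expn_gt0.
have Pp : 0 < 2 ^ l by rewrite expn_gt0.
move: (divn_eq (j %% 2 ^ l.+1) (2 ^ l)); rewrite hm.
set r' := j %% 2 ^ l.+1 in lt *; set r := j %% 2 ^ l.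
have : r' %/ 2 ^ l < 2 by rewrite ltn_divLR // -expnS.
case: (r' %/ 2 ^ l) => [|[|k]] //= _ ->; [left|right]; lia.
Qed.

Lemma kap_lt j l : 0 < kap j l.+1 -> kap j l < kap j l.+1.
Proof.
rewrite /kap.
have lt : j %% 2 ^ l < 2 ^ l by rewrite ltn_mod expn_gt0.
have e2 : 2 ^ l.+1 = 2 ^ l + 2 ^ l by rewrite expnS mul2n addnn.
case: (mod_next j l) => ->; rewrite e2; set r := j %% 2 ^ l in lt *; set P := 2 ^ l in lt e2 *; nia.
Qed.

Lemma kap_le j l : kap j l <= kap j l.+1.
Proof.
case: (posnP (kap j l.+1)) => h; last by apply: ltnW; apply: kap_lt.
rewrite h; move: h; rewrite /kap.
have lt : j %% 2 ^ l < 2 ^ l by rewrite ltn_mod expn_gt0.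
have e2 : 2 ^ l.+1 = 2 ^ l + 2 ^ l by rewrite expnS mul2n addnn.
case: (mod_next j l) => ->; rewrite e2; set r := j %% 2 ^ l in lt *; set P := 2 ^ l in lt e2 *; nia.
Qed.

Lemma kap_mono j l l' : l <= l' -> kap j l <= kap j l'.
Proof.
move=> h; rewrite -(subnK h); elim: (l' - l) => [|k IH] //=.
by apply: (leq_trans IH); rewrite addSn; apply: kap_le.
Qed.

Lemma kap_bound j l m : l <= m -> kap j l <= 2 ^ m * 2 ^ m.
Proof.
move=> h; rewrite /kap.
have lt : j %% 2 ^ l < 2 ^ l by rewrite ltn_mod expn_gt0.
have : 2 ^ l <= 2 ^ m by rewrite leq_exp2l.
nia.
Qed.

Lemma kap_arc m a b j : darc m a b -> a < j -> j < b ->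
  exists l, [/\ 0 < l, l <= m, kap j l = (j - a) * (b - j), b = a + 2 ^ l &
      2 ^ l * (j %/ 2 ^ l) = a].
Proof.
case/darcP => l [hm /dvdnP [k ->] ->] h1 h2.
have Pp : 0 < 2 ^ l by rewrite expn_gt0.
have ej : j = k * 2 ^ l + (j - k * 2 ^ l) by rewrite subnKC // ltnW.
have hr : j - k * 2 ^ l < 2 ^ l by lia.
have hmod : j %% 2 ^ l = j - k * 2 ^ l by rewrite {1}ej modnMDl modn_small.
have hdiv : j %/ 2 ^ l = k by rewrite {1}ej divnMDl // divn_small // addn0.
exists l; split => //.
- case: l hm Pp hr h1 h2 {ej hmod hdiv} => // _ _; rewrite expn0; lia.
- by rewrite /kap hmod; congr (_ * _); lia.
- by rewrite hdiv mulnC.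
Qed.

Section Helly.
Variable I : finType.
Variable t : rel I.
Hypothesis tsym : symmetric t.
Hypothesis tirr : irreflexive t.
Hypothesis tacyc : forall (x : I) (p : seq I),
  ~ (2 <= size p /\ uniq (x :: p) /\ path t x p /\ t (last x p) x).

Definition rS (S : {set I}) := [rel x y | t x y && (x \in S) && (y \in S)].
Definition conn (S : {set I}) := forall a b, a \in S -> b \in S -> connect (rS S) a b.
Definition leafin (U : {set I}) l :=
  l \in U /\ forall y y', y \in U -> y' \in U -> t l y -> t l y' -> y = y'.

Lemma path_suffix (e : rel I) x p s1 y s2 :
  x :: p = s1 ++ y :: s2 -> path e x p -> path e y s2.
Proof.
case: s1 => [|z s1] /= [] -> ->; first by [].
rewrite cat_path => /andP [_] /= /andP [_ ->]. by [].
Qed.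

Lemma leaf_nb x q z y :
  path t x (rcons q z) -> uniq (x :: rcons q z) -> y \in x :: rcons q z -> t z y ->
  y = last x q.
Proof.
move=> pth un yin tzy.
have yz : y != z by apply: contraTneq tzy => ->; rewrite tirr.
have yin' : y \in x :: q.
  move: yin; rewrite -rcons_cons mem_rcons inE (negbTE yz) //.
apply/eqP; apply/negPn/negP => ny.
case/splitPr def: {1}(x :: q) / yin' => [s1 s2].
have e1 : x :: rcons q z = s1 ++ y :: rcons s2 z.
  by rewrite -rcons_cons def rcons_cat rcons_cons.
have hl : last x q = last y s2.
  by rewrite -[last x q]/(last x (x :: q)) def last_cat.
case: s2 def e1 hl => [|w s2] def e1 hl; first by rewrite hl eqxx in ny.
apply: (tacyc (x := y) (p := rcons (w :: s2) z)).
split; first by rewrite size_rcons /=.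
split; first by move: un; rewrite e1 cat_uniq => /and3P [_ _].
split; first exact: (path_suffix e1 pth).
by rewrite last_rcons.
Qed.


Lemma size_uniq_sub (U : {set I}) s : uniq s -> all (mem U) s -> size s <= #|U|.
Proof.
move=> us au; apply/card_geqP; exists s; split => //.
by move=> w /(allP au).
Qed.

Lemma leaf_exists (U : {set I}) : U != set0 -> exists l, leafin U l.
Proof.
case/set0Pn => x0 x0U.
suff aux : forall k x p, #|U| - size p <= k -> x \in U -> all (mem U) p ->
    uniq (x :: p) -> path t x p -> exists l, leafin U l.
  by apply: (aux #|U| x0 [::]) => //; rewrite subn0.
elim=> [|k IH] x p hk xU aU un pth;
  (case: (boolP [exists y, (y \in U) && t (last x p) y && (y \notin x :: p)]) => [/existsP [y /andP [/andP [yU tzy] ny]] | nex]).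
- have hs : size (x :: rcons p y) <= #|U|.
    apply: size_uniq_sub; first by rewrite -rcons_cons rcons_uniq ny un.
    by apply/allP => w; rewrite inE mem_rcons inE => /or3P [/eqP ->|/eqP ->|/(allP aU)].
  move: hs hk; rewrite /= size_rcons; lia.
- exists (last x p); split; first by move: (mem_last x p); rewrite inE => /orP [/eqP ->|/(allP aU)].
  move=> y y' yU y'U ty ty'.
  have hin : forall w, w \in U -> t (last x p) w -> w \in x :: p.
    move=> w wU tw; move/existsPn: nex => /(_ w); rewrite wU tw /=; by case: (w \in x :: p).
  clear nex; case/lastP: p hk aU un pth hin ty ty' => [|q z] _ aU un pth hin ty ty'.
    by move: (hin y yU ty); rewrite inE => /eqP ey; rewrite /= ey tirr in ty.
  rewrite last_rcons in ty ty' hin.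
  by rewrite (leaf_nb pth un (hin y yU ty) ty) (leaf_nb pth un (hin y' y'U ty') ty').
- apply: (IH x (rcons p y)) => //.
  + have hs : size (x :: rcons p y) <= #|U|.
      apply: size_uniq_sub; first by rewrite -rcons_cons rcons_uniq ny un.
      by apply/allP => w; rewrite inE mem_rcons inE => /or3P [/eqP ->|/eqP ->|/(allP aU)].
    move: hs hk; rewrite /= !size_rcons; lia.
  + by apply/allP => w; rewrite mem_rcons inE => /orP [/eqP ->|/(allP aU)].
  + by rewrite -rcons_cons rcons_uniq ny un.
  + by rewrite rcons_path pth tzy.
- exists (last x p); split; first by move: (mem_last x p); rewrite inE => /orP [/eqP ->|/(allP aU)].
  move=> y y' yU y'U ty ty'.
  have hin : forall w, w \in U -> t (last x p) w -> w \in x :: p.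
    move=> w wU tw; move/existsPn: nex => /(_ w); rewrite wU tw /=; by case: (w \in x :: p).
  clear nex; case/lastP: p hk aU un pth hin ty ty' => [|q z] _ aU un pth hin ty ty'.
    by move: (hin y yU ty); rewrite inE => /eqP ey; rewrite /= ey tirr in ty.
  rewrite last_rcons in ty ty' hin.
  by rewrite (leaf_nb pth un (hin y yU ty) ty) (leaf_nb pth un (hin y' y'U ty') ty').
Qed.


Lemma path_rS_mem (S : {set I}) a p : path (rS S) a p -> all (mem S) p.
Proof.
elim: p a => [|w p IH] a //= /andP [/andP [/andP [_ _] wS] pth].
by rewrite wS (IH w pth).
Qed.

Lemma path_restr (S S' : {set I}) a p : path (rS S) a p -> a \in S' -> all (mem S') p -> path (rS S') a p.
Proof.
elim: p a => [|w p IH] a //= /andP [/andP [/andP [taw _] _] pth] aS' /andP [wS' aS'p].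
by rewrite taw aS' wS' /= (IH w pth wS' aS'p).
Qed.

Lemma del_conn (S : {set I}) l : conn S ->
  (forall y y', y \in S -> y' \in S -> t l y -> t l y' -> y = y') -> conn (S :\ l).
Proof.
move=> cS lf a b; rewrite !inE => /andP [al aS] /andP [bl bS].
have /connectP [p pth lst] := cS a b aS bS.
move: bl; rewrite lst; case: (shortenP pth) => p' pth' un' _ bl.
case: (boolP (l \in p')) => lin; last first.
  apply/connectP; exists p' => //.
  apply: (path_restr pth'); first by rewrite !inE al aS.
  apply/allP => w wp; rewrite !inE; apply/andP; split; last exact: (allP (path_rS_mem pth') w wp).
  by apply: contraNneq lin => <-.
case/splitPr: p' / lin pth' un' bl => p1 p2 pth' un' bl.
case: p2 pth' un' bl => [|w p2] pth' un' bl.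
  by rewrite last_cat /= eqxx in bl.
move: pth'; rewrite cat_path /= => /andP [_ /andP [/andP [/andP [t1 s1] sl] /andP [/andP [/andP [t2 _] sw] _]]].
have ew : last a p1 = w by apply: (lf _ _ s1 sw) => //; rewrite tsym.
move: un'; rewrite -cat_cons cat_uniq => /and3P [_ hh _].
have : w \in a :: p1 by rewrite -ew mem_last.
by move=> hw; case/negP: hh; apply/orP; right; apply/orP; left; exact: hw.
Qed.

Lemma helly_aux (K : finType) (i0 : K) : forall k (U : {set I}) (F : K -> {set I}),
  #|U| <= k -> (forall i, F i \subset U) -> (forall i, F i != set0) ->
  (forall i, conn (F i)) -> (forall i j, F i :&: F j != set0) -> exists a, forall i, a \in F i.
Proof.
elim=> [|k IH] U F hU sub ne cn pw.
  case/set0Pn: (ne i0) => x xF.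
  have : x \in U by apply: (subsetP (sub i0)).
  by move: hU; rewrite leqn0 => /eqP /cards0_eq ->; rewrite inE.
have Une : U != set0.
  case/set0Pn: (ne i0) => x xF; apply/set0Pn; exists x; exact: (subsetP (sub i0)).
case: (leaf_exists Une) => l [lU lf].
case: (boolP [exists i, F i == [set l]]) => [/existsP [i /eqP Fi] | nsing].
  exists l => j; case/set0Pn: (pw i j) => w; rewrite inE Fi inE => /andP [/eqP -> //].
have nsing' : forall i, F i != [set l] by move=> i; apply: contraNneq nsing => h; apply/existsP; exists i; rewrite h.
have nb : forall i, l \in F i -> exists y, [/\ y \in F i, y != l & t l y].
  move=> i li.
  have [x xF xl] : exists2 x, x \in F i & x != l.
    apply/exists_inP; apply: contraNT (nsing' i) => /exists_inPn h.
    apply/eqP/setP => z; rewrite inE; apply/idP/idP => [zF|/eqP ->//].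
    by have := h z zF; rewrite negbK.
  have /connectP [p pth lst] := cn i l x li xF.
  case: p pth lst => [|y p] /=; first by move=> _ ex; rewrite -ex eqxx in xl.
  move=> /andP [/andP [/andP [tly _] yF] _] _.
  exists y; split => //.
  by apply: contraTneq tly => ->; rewrite tirr.
suff [a Ha] : exists a, forall i, a \in F i :\ l.
  by exists a => i; move: (Ha i); rewrite inE => /andP [_].
apply: (IH (U :\ l) (fun i => F i :\ l)).
- by move: hU; rewrite (cardsD1 l U) lU.
- by move=> i; apply: setSD.
- move=> i; case/set0Pn: (ne i) => x xF.
  case: (eqVneq x l) => [exl|xl]; last by apply/set0Pn; exists x; rewrite !inE xl.
  have [y [yF yl _]] := nb i ltac:(by rewrite -exl).
  by apply/set0Pn; exists y; rewrite !inE yl.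
- move=> i; apply: del_conn => // y y' yF y'F; apply: lf.
  + exact: (subsetP (sub i)).
  + exact: (subsetP (sub i)).
- move=> i j; case/set0Pn: (pw i j) => w; rewrite inE => /andP [wi wj].
  case: (eqVneq w l) => [ewl|wl]; last by apply/set0Pn; exists w; rewrite !inE wl wi wj.
  rewrite ewl in wi wj.
  have [y [yF yl ty]] := nb i wi.
  have [y' [y'F y'l ty']] := nb j wj.
  have eyy : y = y' by apply: lf => //; [exact: (subsetP (sub i)) | exact: (subsetP (sub j))].
  by apply/set0Pn; exists y; rewrite !inE yl yF eyy y'F.
Qed.

End Helly.

Section TW.
Variables (T : finType) (e : rel T) (I : finType) (t : rel I) (B : I -> {set T}).
Hypothesis td : tree_decomposition e t B.

Definition rX (X : {set T}) := [rel x y | e x y && (x \in X) && (y \in X)].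
Definition SX (X : {set T}) := [set a | [exists v, (v \in X) && (v \in B a)]].

Lemma same_vertex (X : {set T}) u a c : u \in X -> u \in B a -> u \in B c -> connect (rS t (SX X)) a c.
Proof.
move=> uX ua uc; case: td => _ [_ [_ h4]].
apply: (connect_sub _ (h4 u a c ua uc)) => x y /= /andP [txy /andP [ux uy]].
apply: connect1; rewrite /= txy !inE /=.
by apply/andP; split; apply/existsP; exists u; rewrite uX.
Qed.

Lemma SX_conn (X : {set T}) : (forall u w, u \in X -> w \in X -> connect (rX X) u w) -> conn t (SX X).
Proof.
move=> cX a b; rewrite !inE => /existsP [u /andP [uX ua]] /existsP [w /andP [wX wb]].
have /connectP [p pth lst] := cX u w uX wX.
elim: p u a uX ua pth lst => [|w' p IH] u a uX ua /=.
  by move=> _ ewu; apply: (same_vertex uX ua); rewrite -ewu.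
move=> /andP [/andP [/andP [euw _] w'X] pth] lst.
case: td => _ [_ [h3 _]].
case: (h3 u w' euw) => c /andP [uc w'c].
apply: (connect_trans (same_vertex uX ua uc)).
exact: (IH w' c w'X w'c pth lst).
Qed.

End TW.

Lemma tw_cross (T : finType) (e : rel T) (K : finType) (ri ci : T -> K) (R C : K -> {set T}) :
  (forall i v, v \in R i -> ri v = i) -> (forall j v, v \in C j -> ci v = j) ->
  (forall i j, R i :&: C j != set0) ->
  (forall i j u w, u \in R i :|: C j -> w \in R i :|: C j -> connect (rX e (R i :|: C j)) u w) ->
  forall (I : finType) (t : rel I) (B : I -> {set T}), tree_decomposition e t B ->
  #|K| <= (width B).+1.
Proof.
move=> hri hci hne hcn I t B td.
case: (posnP #|K|) => [-> //|/card_gt0P [i0 _]].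
have [[[tsym tirr] [_ [_ tacyc]]] _] := td.
pose X (k : K * K) := R k.1 :|: C k.2.
have [a Ha] : exists a, forall k, a \in SX B (X k).
  apply: (@helly_aux I t tsym tirr tacyc _ (i0, i0) #|I| setT).
  - by apply: max_card.
  - by move=> k; apply: subsetT.
  - move=> k; case/set0Pn: (hne k.1 k.2) => v; rewrite inE => /andP [vR _].
    have [_ [h2 _]] := td; case: (h2 v) => a va.
    by apply/set0Pn; exists a; rewrite inE; apply/existsP; exists v; rewrite va !inE vR.
  - by move=> k; apply: (SX_conn td) => u w uX wX; apply: hcn.
  - move=> k k'; case/set0Pn: (hne k.1 k'.2) => v; rewrite inE => /andP [vR vC].
    have [_ [h2 _]] := td; case: (h2 v) => a va.
    by apply/set0Pn; exists a; rewrite !inE; apply/andP; split; apply/existsP; exists v;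
      rewrite va !inE ?vR ?vC ?orbT.
have hw : #|B a| <= (width B).+1.
  rewrite /width; apply: (leq_trans (@leq_bigmax _ (fun i => #|B i|) a)); exact: leqSpred.
apply: leq_trans hw.
case: (boolP [forall i, [exists v, (v \in B a) && (v \in R i)]]) => [/forallP hall | ].
  apply: (leq_trans _ (leq_imset_card ri (B a))).
  rewrite -cardsT subset_leq_card //; apply/subsetP => i _.
  case/existsP: (hall i) => v /andP [va vR]; apply/imsetP; exists v => //; by rewrite (hri i v vR).
rewrite negb_forall => /existsP [i /existsPn hi].
apply: (leq_trans _ (leq_imset_card ci (B a))).
rewrite -cardsT subset_leq_card //; apply/subsetP => j _.
move: (Ha (i, j)); rewrite inE => /existsP [v /andP [vX va]].
apply/imsetP; exists v => //.
move: vX; rewrite !inE /= => /orP [vR|vC]; last by rewrite (hci j v vC).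
by move: (hi v); rewrite va vR.
Qed.

Section Graph.
Variable m : nat.
Hypothesis m_gt0 : 0 < m.
Local Notation n := (2 ^ m).
Definition V := ('I_n.+1 * 'I_n.+1 * 'I_m.+1)%type.

Definition adj (u v : V) : bool :=
 [|| [&& u.1.1 == v.1.1, u.2 == 0 :> nat, v.2 == 0 :> nat & (darc m u.1.2 v.1.2 || darc m v.1.2 u.1.2)],
     [&& u.1.2 == 0 :> nat, v.1.2 == 0 :> nat, u.2 == 0 :> nat, v.2 == 0 :> nat & (darc m u.1.1 v.1.1 || darc m v.1.1 u.1.1)],
     [&& u.1.1 == v.1.1, u.1.2 == v.1.2 & ((v.2 == u.2.+1 :> nat) || (u.2 == v.2.+1 :> nat))] |
     [&& u.1.2 == v.1.2 & ([&& u.2 == m :> nat, v.2 == 0 :> nat & (v.1.1 == u.1.1.+1 :> nat)] || [&& v.2 == m :> nat, u.2 == 0 :> nat & (u.1.1 == v.1.1.+1 :> nat)])]].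

Lemma adj_sym : symmetric adj.
Proof.
have h : forall u v, adj u v -> adj v u.
  move=> u v; rewrite /adj => /or4P [/and4P [a b c d]|/and5P [a b c d f]|/and3P [a b c]|/andP [a b]];
    apply/or4P; [apply: Or41|apply: Or42|apply: Or43|apply: Or44].
  - by rewrite eq_sym a b c orbC d.
  - by rewrite a b c d orbC f.
  - by rewrite eq_sym a eq_sym b orbC c.
  - by rewrite eq_sym a orbC b.
by move=> u v; apply/idP/idP; apply: h.
Qed.

Lemma adj_irr : irreflexive adj.
Proof.
move=> u; rewrite /adj.
have d : forall a, darc m a a = false by move=> a; apply/negbTE/negP => h; move: (darc_lt h); rewrite ltnn.
rewrite !d /= !andbF /=.
have -> : (u.2 == (u.2).+1 :> nat) = false by rewrite eqn_leq ltnn andbF.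
have -> : (u.1.1 == (u.1.1).+1 :> nat) = false by rewrite eqn_leq ltnn andbF.
by rewrite !andbF.
Qed.

Definition reach (E : rel V) k x y := exists p, size p <= k /\ path E x p /\ last x p = y.

Lemma reach_refl E x : reach E 0 x x.
Proof. by exists [::]. Qed.

Lemma reach_le E k k' x y : k <= k' -> reach E k x y -> reach E k' x y.
Proof. move=> h [p [s [pt l]]]; exists p; split; [exact: (leq_trans s h) | by []]. Qed.

Lemma reach_trans E k k' x y z : reach E k x y -> reach E k' y z -> reach E (k + k') x z.
Proof.
move=> [p [s [pt l]]] [p' [s' [pt' l']]]; exists (p ++ p'); split; [|split].
- by rewrite size_cat leq_add.
- by rewrite cat_path pt l pt'.
- by rewrite last_cat l.
Qed.

Lemma reach_step E k x y z : reach E k x y -> E y z -> reach E k.+1 x z.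
Proof.
move=> r eyz; rewrite -addn1; apply: (reach_trans r).
by exists [:: z]; rewrite /= eyz.
Qed.

Lemma reach_connect E k x y : reach E k x y -> connect E x y.
Proof. by move=> [p [_ [pt l]]]; apply/connectP; exists p. Qed.

Lemma dyadic_reach (E : rel V) (f : nat -> V) :
  (forall x l, l <= m -> 2 ^ l %| x -> x + 2 ^ l <= n -> E (f x) (f (x + 2 ^ l))) ->
  forall j, j <= n -> reach E m (f 0) (f j).
Proof.
move=> hE.
have aux : forall k, k <= m -> forall s j, 2 ^ k %| s -> s + j <= n -> j < 2 ^ k ->
    reach E k (f s) (f (s + j)).
  elim=> [|k IH] km s j ds sj jk.
    by move: jk; rewrite expn0 ltnS leqn0 => /eqP ->; rewrite addn0; apply: reach_refl.
  have ds' : 2 ^ k %| s by apply: dvdn_trans ds; rewrite expnS dvdn_mull.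
  case: (ltnP j (2 ^ k)) => hj.
    by apply: (reach_le (leqnSn k)); apply: IH => //; apply: ltnW.
  have e1 : E (f s) (f (s + 2 ^ k)) by apply: hE => //; [apply: ltnW | lia].
  have r2 := IH (ltnW km) (s + 2 ^ k) (j - 2 ^ k) _ _ _.
  rewrite -add1n; apply: (@reach_trans E 1 k _ (f (s + 2 ^ k))).
    by rewrite -[1]/(0.+1); apply: (reach_step (reach_refl E _)).
  have -> : s + j = s + 2 ^ k + (j - 2 ^ k) by lia.
  apply: r2.
  - by rewrite dvdn_addr // dvdnn.
  - lia.
  - move: jk; rewrite expnS; lia.
move=> j jn; case: (ltnP j n) => hj.
  by have := aux m (leqnn m) 0 j (dvdn0 _) jn hj; rewrite add0n.
have -> : j = 0 + 2 ^ m by lia.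
apply: (reach_le m_gt0); apply: (reach_step (reach_refl E _)).
by apply: hE => //; rewrite add0n.
Qed.

Lemma col_reach (E : rel V) i j :
  (forall l, l < m -> E (i, j, inord l) (i, j, inord l.+1)) ->
  forall l, l <= m -> reach E l (i, j, ord0) (i, j, inord l).
Proof.
move=> hE; elim=> [|l IH] hl.
  have -> : (inord 0 : 'I_m.+1) = ord0 by apply: val_inj; rewrite /= inordK.
  exact: reach_refl.
apply: (reach_step (IH (ltnW hl))); exact: hE.
Qed.

Lemma e_row i x l : l <= m -> 2 ^ l %| x -> x + 2 ^ l <= n ->
  adj (i, inord x, ord0) (i, inord (x + 2 ^ l), ord0).
Proof.
move=> hl dx hx; apply/or4P; apply: Or41; rewrite /= eqxx /=.
rewrite !inordK; [|lia|lia].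
by apply/orP; left; apply/darcP; exists l.
Qed.

Lemma e_root x l : l <= m -> 2 ^ l %| x -> x + 2 ^ l <= n ->
  adj (inord x, ord0, ord0) (inord (x + 2 ^ l), ord0, ord0).
Proof.
move=> hl dx hx; apply/or4P; apply: Or42; rewrite /=.
rewrite !inordK; [|lia|lia].
by apply/orP; left; apply/darcP; exists l.
Qed.

Lemma e_col i j l : l < m -> adj (i, j, inord l) (i, j, inord l.+1).
Proof.
move=> hl; apply/or4P; apply: Or43; rewrite /= !eqxx /= !inordK //; last by apply: ltnW.
by rewrite eqxx.
Qed.

Lemma e_top (i : 'I_n.+1) j : i < n -> adj (i, j, inord m) (inord i.+1, j, ord0).
Proof.
move=> hi; apply/or4P; apply: Or44; rewrite /= eqxx /= !inordK //.
by rewrite !eqxx.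
Qed.

Lemma inord_val' k (x : 'I_k.+1) : inord (nat_of_ord x) = x.
Proof. by apply: val_inj; rewrite /= inordK. Qed.

Lemma radius_ok : radius_le adj (3 * m).
Proof.
exists (ord0, ord0, ord0) => -[[i j] l].
have z0 : (inord 0 : 'I_n.+1) = ord0 by apply: val_inj; rewrite /= inordK.
have r1 : reach adj m (ord0, ord0, ord0) (i, ord0, ord0).
  have h0 : forall x l', l' <= m -> 2 ^ l' %| x -> x + 2 ^ l' <= n ->
    adj ((fun x => (inord x, ord0, ord0) : V) x) ((fun x => (inord x, ord0, ord0) : V) (x + 2 ^ l')).
    by move=> x l' hl dx hx; apply: e_root.
  have := dyadic_reach h0 (j := i); rewrite /= inord_val' z0; apply.
  by rewrite -ltnS.
have r2 : reach adj m (i, ord0, ord0) (i, j, ord0).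
  have h0 : forall x l', l' <= m -> 2 ^ l' %| x -> x + 2 ^ l' <= n ->
    adj ((fun x => (i, inord x, ord0) : V) x) ((fun x => (i, inord x, ord0) : V) (x + 2 ^ l')).
    by move=> x l' hl dx hx; apply: e_row.
  have := dyadic_reach h0 (j := j); rewrite /= inord_val' z0; apply.
  by rewrite -ltnS.
have r3 : reach adj m (i, j, ord0) (i, j, l).
  have h0 : forall l', l' < m -> adj (i, j, inord l') (i, j, inord l'.+1).
    by move=> l' hl; apply: e_col.
  have := col_reach h0 (l := l); rewrite inord_val' => h.
  apply: (reach_le (k := l)); first by rewrite -ltnS.
  by apply: h; rewrite -ltnS.
have := reach_trans (reach_trans r1 r2) r3.
by rewrite -[3 * m]/(m + (m + (m + 0))) addn0 addnA.
Qed.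


End Graph.

Section GT.
Variable m : nat.
Hypothesis m_gt0 : 0 < m.
Local Notation n := (2 ^ m).
Local Notation V := (V m).
Local Notation adj := (@adj m).

Definition Rset (i : 'I_n.+1) := [set v : V | (v.1.1 == i) && (v.2 == ord0)].
Definition Cset (j : 'I_n.+1) := [set v : V | v.1.2 == j].

Lemma cross_conn i j u w : u \in Rset i :|: Cset j -> w \in Rset i :|: Cset j ->
  connect (rX adj (Rset i :|: Cset j)) u w.
Proof.
set X := Rset i :|: Cset j; set E := rX adj X.
have Esym : symmetric E.
  by move=> x y; rewrite /E /rX /= adj_sym; case: (x \in X); case: (y \in X); rewrite ?andbF ?andbT.
have csym : connect_sym E by apply: sym_connect_sym.
have z0 : (inord 0 : 'I_n.+1) = ord0 by apply: val_inj; rewrite /= inordK.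
have hrow : forall x, x <= n -> connect E (i, ord0, ord0) (i, inord x, ord0).
  move=> x hx.
  have h0 : forall x l', l' <= m -> 2 ^ l' %| x -> x + 2 ^ l' <= n ->
    E ((fun x => (i, inord x, ord0) : V) x) ((fun x => (i, inord x, ord0) : V) (x + 2 ^ l')).
    move=> y l' hl dy hy; rewrite /E /rX /= e_row // !inE /= !eqxx //.
  have := @dyadic_reach m m_gt0 E (fun x => (i, inord x, ord0)) h0 x hx; rewrite /= z0; exact: reach_connect.
have hcol1 : forall (i' : 'I_n.+1) (l : 'I_m.+1), connect E (i', j, ord0) (i', j, l).
  move=> i' l.
  have h0 : forall l', l' < m -> E (i', j, inord l') (i', j, inord l'.+1).
    by move=> l' hl; rewrite /E /rX /= e_col // !inE /= !eqxx !orbT.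
  have := @col_reach m E i' j h0 l; rewrite inord_val' => h.
  by apply: reach_connect; apply: h; rewrite -ltnS.
have hcol2 : forall x, x <= n -> connect E (ord0, j, ord0) (inord x, j, ord0).
  elim=> [|x IH] hx; first by rewrite z0.
  apply: (connect_trans (IH (ltnW hx))).
  apply: (connect_trans (hcol1 _ (inord m))).
  have xn : x < n.+1 by lia.
  have ht := @e_top m (inord x) j; rewrite inordK // in ht.
  apply: connect1; rewrite /E /rX /= ht; last by lia.
  by rewrite !inE /= !eqxx !orbT.
have hub : forall w, w \in X -> connect E (i, ord0, ord0) w.
  move=> [[i' j'] l]; rewrite !inE /= => /orP [/andP [/eqP -> /eqP ->]|/eqP ->].
    by have := hrow j'; rewrite inord_val'; apply; rewrite -ltnS.
  apply: (connect_trans (y := (i, j, ord0))).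
    by have := hrow j; rewrite inord_val'; apply; rewrite -ltnS.
  apply: (connect_trans (y := (ord0, j, ord0))).
    by rewrite csym; have := hcol2 i; rewrite inord_val'; apply; rewrite -ltnS.
  apply: (connect_trans (y := (i', j, ord0))); last exact: hcol1.
  by have := hcol2 i'; rewrite inord_val'; apply; rewrite -ltnS.
move=> uX wX; apply: (connect_trans (y := (i, ord0, ord0))); last exact: hub.
by rewrite csym; apply: hub.
Qed.

Lemma tw_ok : forall (I : finType) (t : rel I) (B : I -> {set V}),
  tree_decomposition adj t B -> n <= width B.
Proof.
move=> I t B td.
have := @tw_cross V adj 'I_n.+1 (fun v => v.1.1) (fun v => v.1.2) Rset Cset _ _ _ _ I t B td.
rewrite card_ord ltnS; apply.
- by move=> i v; rewrite inE => /andP [/eqP].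
- by move=> j v; rewrite inE => /eqP.
- by move=> i j; apply/set0Pn; exists (i, j, ord0); rewrite !inE !eqxx.
- by move=> i j u w; apply: cross_conn.
Qed.

End GT.

Open Scope R_scope.

Lemma INR_ltn a b : (a < b)%N -> INR a < INR b.
Proof. by move=> h; apply: lt_INR; apply/ltP. Qed.
Lemma INR_len a b : (a <= b)%N -> INR a <= INR b.
Proof. by move=> h; apply: le_INR; apply/leP. Qed.
Lemma INR_ltn' a b : INR a < INR b -> (a < b)%N.
Proof. by move=> h; apply/ltP; apply: INR_lt. Qed.
Lemma INR_len' a b : INR a <= INR b -> (a <= b)%N.
Proof. by move=> h; apply/leP; apply: INR_le. Qed.
Lemma INR_eqn a b : INR a = INR b -> a = b.
Proof. exact: INR_eq. Qed.
Lemma INR_addn a b : INR (a + b)%N = INR a + INR b.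
Proof. exact: plus_INR. Qed.
Lemma INR_muln a b : INR (a * b)%N = INR a * INR b.
Proof. exact: mult_INR. Qed.
Lemma INR_subn a b : (b <= a)%N -> INR (a - b)%N = INR a - INR b.
Proof. by move=> h; apply: minus_INR; apply/leP. Qed.
Lemma INR_ge0 a : 0 <= INR a.
Proof. exact: pos_INR. Qed.

Open Scope R_scope.

Section Geo.
Variable m : nat.
Hypothesis m_gt0 : (0 < m)%N.
Local Notation n := (2 ^ m)%N.
Local Notation V := (V m).
Local Notation adj := (@adj m).

Definition Hh : R := INR (n * n + 1)%N.
Definition fr (l : nat) : R := INR l / INR (2 * m + 2)%N.
Definition sig (j l : nat) : R := INR (kap j l) + fr l.
Definition code (v : V) : nat := (v.1.1 * m.+1 + v.2)%N.
Definition hgt (v : V) : R := INR v.1.1 * Hh + sig v.1.2 v.2.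
Definition posv (v : V) : point := (INR v.1.2, hgt v).

Lemma fr_ge0 l : 0 <= fr l.
Proof.
rewrite /fr /Rdiv; apply: Rmult_le_pos; first exact: INR_ge0.
by apply: Rlt_le; apply: Rinv_0_lt_compat; apply: lt_0_INR; apply/ltP; lia.
Qed.

Lemma fr_lt1 l : (l <= m)%N -> fr l < 1.
Proof.
move=> h; rewrite /fr.
have hp : 0 < INR (2 * m + 2)%N by apply: lt_0_INR; apply/ltP; lia.
apply: (Rmult_lt_reg_r (INR (2 * m + 2)%N)) => //.
rewrite /Rdiv Rmult_assoc Rinv_l ?Rmult_1_r ?Rmult_1_l; last by lra.
by apply: INR_ltn; lia.
Qed.

Lemma fr_gt0 l : (0 < l)%N -> 0 < fr l.
Proof.
move=> h; rewrite /fr; apply: Rdiv_lt_0_compat; apply: lt_0_INR; apply/ltP; lia.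
Qed.

Lemma fr_lt l l' : (l < l')%N -> fr l < fr l'.
Proof.
move=> h; rewrite /fr /Rdiv; apply: Rmult_lt_compat_r; last exact: INR_ltn.
apply: Rinv_0_lt_compat; apply: lt_0_INR; apply/ltP; lia.
Qed.

Lemma fr0 : fr 0 = 0.
Proof. by rewrite /fr /= /Rdiv Rmult_0_l. Qed.

Lemma sig0 j : sig j 0 = 0.
Proof. by rewrite /sig kap0 fr0 /= Rplus_0_l. Qed.

Lemma sig_ge0 j l : 0 <= sig j l.
Proof. rewrite /sig; have := INR_ge0 (kap j l); have := fr_ge0 l; lra. Qed.

Lemma Hh_big : INR (n * n)%N + 1 = Hh.
Proof. by rewrite /Hh INR_addn. Qed.

Lemma sig_ltH j l : (l <= m)%N -> sig j l < Hh.
Proof.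
move=> h; rewrite /sig -Hh_big.
have := INR_len (kap_bound j h); have := fr_lt1 h; lra.
Qed.

Lemma Hh_pos : 0 < Hh.
Proof. rewrite -Hh_big; have := INR_ge0 (n * n); lra. Qed.

Lemma sig_lt j l l' : (l < l')%N -> (l' <= m)%N -> sig j l < sig j l'.
Proof.
move=> h _; rewrite /sig; have := INR_len (kap_mono j (ltnW h)); have := fr_lt h; lra.
Qed.

Lemma sig_cross j l : (0 < l)%N -> (l <= m)%N -> (0 < kap j l)%N ->
  sig j l.-1 < INR (kap j l) < sig j l.
Proof.
move=> l0 lm kp; rewrite /sig; split.
  have h : (kap j l.-1 < kap j l)%N by have := @kap_lt j l.-1; rewrite prednK //; apply.
  have := INR_len h; rewrite -addn1 INR_addn [INR 1]/= => h'.
  have := fr_lt1 (l := l.-1) ltac:(lia); lra.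
have := fr_gt0 l0; lra.
Qed.

Lemma sig_nat j l K : (l <= m)%N -> sig j l = INR K -> l = 0%N.
Proof.
move=> lm; rewrite /sig => e.
case: (posnP l) => // l0; exfalso.
have f0 := fr_gt0 l0; have f1 := fr_lt1 lm.
case: (ltnP (kap j l) K) => h.
  have := INR_len h; rewrite -addn1 INR_addn [INR 1]/=; lra.
have := INR_len h; lra.
Qed.

Lemma strip_eq r1 r2 e1 e2 : 0 <= e1 < Hh -> 0 <= e2 < Hh ->
  INR r1 * Hh + e1 = INR r2 * Hh + e2 -> r1 = r2.
Proof.
move=> h1 h2 e; have Hp := Hh_pos.
case: (ltngtP r1 r2) => // h; exfalso.
- have := INR_len h; rewrite -addn1 INR_addn [INR 1]/= => h'.
  have : (INR r1 + 1) * Hh <= INR r2 * Hh by apply: Rmult_le_compat_r; lra.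
  rewrite Rmult_plus_distr_r Rmult_1_l; lra.
- have := INR_len h; rewrite -addn1 INR_addn [INR 1]/= => h'.
  have : (INR r2 + 1) * Hh <= INR r1 * Hh by apply: Rmult_le_compat_r; lra.
  rewrite Rmult_plus_distr_r Rmult_1_l; lra.
Qed.

Lemma code_inj (u v : V) : code u = code v -> u.1.1 = v.1.1 :> nat /\ u.2 = v.2 :> nat.
Proof.
rewrite /code; have hu := ltn_ord u.2; have hv := ltn_ord v.2.
move: (nat_of_ord u.1.1) (nat_of_ord v.1.1) (nat_of_ord u.2) (nat_of_ord v.2) hu hv => a b c d hu hv e.
have : a = b by nia.
move=> ab; subst; split => //; lia.
Qed.

Lemma hgt_mono (u v : V) : u.1.2 = v.1.2 -> (code u < code v)%N -> hgt u < hgt v.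
Proof.
move=> ec; rewrite /code /hgt ec => h.
have hu := ltn_ord u.2; have hv := ltn_ord v.2.
case: (ltngtP u.1.1 v.1.1) => hr.
- have s1 := sig_ltH v.1.2 (l := u.2) ltac:(lia).
  have s2 := sig_ge0 v.1.2 v.2.
  have := INR_len hr; rewrite -addn1 INR_addn [INR 1]/= => h'.
  have : (INR u.1.1 + 1) * Hh <= INR v.1.1 * Hh by apply: Rmult_le_compat_r; [have := Hh_pos|]; lra.
  lra.
- exfalso; nia.
- rewrite hr in h; rewrite hr; apply: Rplus_lt_compat_l; apply: sig_lt; lia.
Qed.

Lemma hgt_le (u v : V) : u.1.2 = v.1.2 -> (code u <= code v)%N -> hgt u <= hgt v.
Proof.
move=> ec; rewrite leq_eqVlt => /orP [/eqP e|h]; last by apply: Rlt_le; apply: hgt_mono.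
have [e1 e2] := code_inj e; rewrite /hgt e1 e2 ec; lra.
Qed.

Lemma code_between (u v w : V) : u.1.2 = w.1.2 -> v.1.2 = w.1.2 -> code v = (code u).+1 ->
  hgt u < hgt w -> hgt w < hgt v -> False.
Proof.
move=> eu ev cv h1 h2.
case: (leqP (code w) (code u)) => h.
  by have := hgt_le (esym eu) h; lra.
have : (code v <= code w)%N by rewrite cv.
by move/(hgt_le ev); lra.
Qed.

Lemma code_uniq (u v u' v' : V) y : u.1.2 = u'.1.2 -> v.1.2 = u.1.2 -> v'.1.2 = u'.1.2 ->
  code v = (code u).+1 -> code v' = (code u').+1 ->
  hgt u < y < hgt v -> hgt u' < y < hgt v' -> code u = code u'.
Proof.
move=> e0 e1 e2 c1 c2 [h1 h2] [h3 h4].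
case: (ltngtP (code u) (code u')) => // h.
- have : (code v <= code u')%N by rewrite c1.
  move/(hgt_le (etrans e1 e0)); lra.
- have : (code v' <= code u)%N by rewrite c2.
  move/(hgt_le (etrans e2 (esym e0))); lra.
Qed.

End Geo.

Open Scope R_scope.

Section Geo2.
Variable m : nat.
Hypothesis m_gt0 : (0 < m)%N.
Local Notation n := (2 ^ m)%N.
Local Notation V := (V m).
Local Notation adj := (@adj m).
Local Notation posv := (@posv m).
Local Notation hgt := (@hgt m).
Local Notation code := (@code m).
Local Notation Hh := (Hh m).

Definition rootk (u v : V) : bool :=
  [&& u.1.2 == 0%N :> nat, v.1.2 == 0%N :> nat, u.2 == 0%N :> nat & v.2 == 0%N :> nat].

Definition curv (u v : V) (t : R) : point :=
  ((1 - t) * (posv u).1 + t * (posv v).1 -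
     (if rootk u v then t * (1 - t) * (((posv v).2 - (posv u).2) * ((posv v).2 - (posv u).2)) else 0),
   (1 - t) * (posv u).2 + t * (posv v).2 + t * (1 - t) * (((posv v).1 - (posv u).1) * ((posv v).1 - (posv u).1))).

Lemma rootkC u v : rootk u v = rootk v u.
Proof. by rewrite /rootk; case: (u.1.2 == 0%N :> nat); case: (v.1.2 == 0%N :> nat); case: (u.2 == 0%N :> nat); case: (v.2 == 0%N :> nat). Qed.

Lemma curv0 u v : curv u v 0 = posv u.
Proof.
rewrite /curv; case: (posv u) => xu yu; case: (posv v) => xv yv /=.
by case: (rootk u v); f_equal; ring.
Qed.

Lemma curv1 u v : curv u v 1 = posv v.
Proof.
rewrite /curv; case: (posv u) => xu yu; case: (posv v) => xv yv /=.
by case: (rootk u v); f_equal; ring.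
Qed.

Lemma curv_sym u v t : curv u v t = curv v u (1 - t).
Proof.
rewrite /curv rootkC; case: (posv u) => xu yu; case: (posv v) => xv yv /=.
by case: (rootk v u); f_equal; ring.
Qed.

Lemma curv_cont1 u v : continuity (fun t => fst (curv u v t)).
Proof. rewrite /curv /=; case: (rootk u v); reg. Qed.

Lemma curv_cont2 u v : continuity (fun t => snd (curv u v t)).
Proof. rewrite /curv /=; reg. Qed.

Definition RA (a b : V) := [/\ a.1.1 = b.1.1, a.2 = 0%N :> nat, b.2 = 0%N :> nat & darc m a.1.2 b.1.2].
Definition RT (a b : V) := [/\ a.1.2 = 0%N :> nat, b.1.2 = 0%N :> nat, a.2 = 0%N :> nat, b.2 = 0%N :> nat & darc m a.1.1 b.1.1].
Definition VP (a b : V) := a.1.2 = b.1.2 /\ code b = (code a).+1.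

Lemma adj_canon u v : adj u v -> exists a b, ((a = u /\ b = v) \/ (a = v /\ b = u)) /\
  (RA a b \/ RT a b \/ VP a b).
Proof.
rewrite /adj => /or4P [/and4P [/eqP a /eqP b /eqP c /orP [d|d]]|/and5P [/eqP a /eqP b /eqP c /eqP d /orP [f|f]]|/and3P [/eqP a /eqP b /orP [/eqP c|/eqP c]]|/andP [/eqP a /orP [/and3P [/eqP b /eqP c /eqP d]|/and3P [/eqP b /eqP c /eqP d]]]].
- by exists u, v; split; [left|left].
- by exists v, u; split; [right|left].
- by exists u, v; split; [left|right; left].
- by exists v, u; split; [right|right; left].
- exists u, v; split; first by left. right; right; split => //; rewrite /code a c; lia.
- exists v, u; split; first by right. right; right; split => //; rewrite /code a c; lia.
- exists u, v; split; first by left. right; right; split => //; rewrite /code b c d; lia.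
- exists v, u; split; first by right. right; right; split => //; rewrite /code b c d; lia.
Qed.

Lemma interior p u v : on_edge curv u v p -> p <> posv u -> p <> posv v ->
  exists t, 0 < t < 1 /\ curv u v t = p.
Proof.
move=> [t [h0 [h1 e]]] pu pv; exists t; split => //.
split.
  have [//|et] := Rle_lt_or_eq_dec _ _ h0.
  by exfalso; apply: pu; rewrite -e -et curv0.
have [//|et] := Rle_lt_or_eq_dec _ _ h1.
by exfalso; apply: pv; rewrite -e et curv1.
Qed.

Lemma on_edge_sym p u v : on_edge curv u v p -> on_edge curv v u p.
Proof. move=> [t [h0 [h1 e]]]; exists (1 - t); split; [lra|split; [lra|]]; by rewrite -curv_sym. Qed.

Lemma pt_RA a b t : RA a b -> 0 < t < 1 -> exists s, INR a.1.2 < s < INR b.1.2 /\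
  curv a b t = (s, INR a.1.1 * Hh + (s - INR a.1.2) * (INR b.1.2 - s)).
Proof.
case=> e1 e2 e3 d ht.
have lt := INR_ltn (darc_lt d).
have rk : rootk a b = false by rewrite /rootk; apply/negbTE; have := darc_lt d; case: (b.1.2 == 0%N :> nat) / eqP => [->|]; rewrite ?andbF.
exists ((1 - t) * INR a.1.2 + t * INR b.1.2); split; first by split; nra.
rewrite /curv rk /posv /hgt e2 e3 e1 !sig0 /=; f_equal; ring.
Qed.

Lemma pt_RT a b t : RT a b -> 0 < t < 1 -> exists y, INR a.1.1 * Hh < y < INR b.1.1 * Hh /\
  curv a b t = (-((y - INR a.1.1 * Hh) * (INR b.1.1 * Hh - y)), y).
Proof.
case=> e1 e2 e3 e4 d ht.
have lt := INR_ltn (darc_lt d).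
have Hp := Hh_pos m.
have rk : rootk a b = true by rewrite /rootk e1 e2 e3 e4.
have lt' : INR a.1.1 * Hh < INR b.1.1 * Hh by apply: Rmult_lt_compat_r.
exists ((1 - t) * (INR a.1.1 * Hh) + t * (INR b.1.1 * Hh)); split; first by split; nra.
rewrite /curv rk /posv /hgt e1 e2 e3 e4 !sig0 /=; f_equal; ring.
Qed.

Lemma VP_rootk a b : VP a b -> rootk a b = false.
Proof.
case=> e c; rewrite /rootk; apply/negbTE/negP => /and4P [_ _ /eqP h1 /eqP h2].
move: c; rewrite /code h1 h2 !addn0 => c.
have h : (a.1.1 < b.1.1)%N by nia.
have : (a.1.1.+1 * m.+1 <= b.1.1 * m.+1)%N by rewrite leq_mul2r h orbT.
rewrite mulSn c; lia.
Qed.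

Lemma pt_VP a b t : VP a b -> 0 < t < 1 -> exists y, hgt a < y < hgt b /\
  curv a b t = (INR a.1.2, y).
Proof.
move=> hv ht; have [e c] := hv.
have lt : hgt a < hgt b by apply: hgt_mono => //; rewrite c.
exists ((1 - t) * hgt a + t * hgt b); split; first by split; nra.
rewrite /curv (VP_rootk hv) /posv e /=; f_equal; ring.
Qed.

End Geo2.

Open Scope R_scope.

Lemma lam_real a b c d s : a < s < b -> c < s < d ->
  (b <= c \/ d <= a \/ (a <= c /\ d <= b) \/ (c <= a /\ b <= d)) ->
  (s - a) * (b - s) = (s - c) * (d - s) -> a = c /\ b = d.
Proof.
move=> [h1 h2] [h3 h4] [h|[h|[[h5 h6]|[h5 h6]]]] e; try lra.
- case: (Rle_lt_or_eq_dec _ _ h5) => h7; case: (Rle_lt_or_eq_dec _ _ h6) => h8; try (split; lra).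
  + have : (s - c) * (d - s) < (s - a) * (b - s) by apply: Rmult_le_0_lt_compat; lra. lra.
  + have : (s - c) * (d - s) < (s - a) * (b - s) by subst; nra. lra.
  + have : (s - c) * (d - s) < (s - a) * (b - s) by subst; nra. lra.
- case: (Rle_lt_or_eq_dec _ _ h5) => h7; case: (Rle_lt_or_eq_dec _ _ h6) => h8; try (split; lra).
  + have : (s - a) * (b - s) < (s - c) * (d - s) by apply: Rmult_le_0_lt_compat; lra. lra.
  + have : (s - a) * (b - s) < (s - c) * (d - s) by subst; nra. lra.
  + have : (s - a) * (b - s) < (s - c) * (d - s) by subst; nra. lra.
Qed.

Section Geo3.
Variable m : nat.
Hypothesis m_gt0 : (0 < m)%N.
Local Notation n := (2 ^ m)%N.
Local Notation V := (V m).
Local Notation adj := (@adj m).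
Local Notation posv := (@posv m).
Local Notation hgt := (@hgt m).
Local Notation code := (@code m).
Local Notation Hh := (Hh m).
Local Notation curv := (@curv m).
Local Notation RA := (@RA m).
Local Notation RT := (@RT m).
Local Notation VP := (@VP m).

Lemma V_eq (u v : V) : u.1.1 = v.1.1 :> nat -> u.1.2 = v.1.2 :> nat -> u.2 = v.2 :> nat -> u = v.
Proof.
by case: u => [[a b] c]; case: v => [[a' b'] c'] /= e1 e2 e3; congr (_, _, _); apply: val_inj.
Qed.

Lemma col_le (v : V) : INR v.1.2 <= INR n.
Proof. apply: INR_len; rewrite -ltnS; exact: ltn_ord. Qed.

Lemma RA_height (a b : V) s : RA a b -> INR a.1.2 < s < INR b.1.2 ->
  0 < (s - INR a.1.2) * (INR b.1.2 - s) < Hh.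
Proof.
case=> _ _ _ d [h1 h2].
have hb := col_le b; have ha := INR_ge0 a.1.2.
rewrite -Hh_big INR_muln; split; first by nra.
have : (s - INR a.1.2) * (INR b.1.2 - s) <= (INR b.1.2 - INR a.1.2) * (INR b.1.2 - INR a.1.2) by nra.
have : (INR b.1.2 - INR a.1.2) * (INR b.1.2 - INR a.1.2) <= INR n * INR n by nra.
lra.
Qed.

Lemma lam_nat m' a b c d : darc m' a b -> darc m' c d ->
  (INR b <= INR c \/ INR d <= INR a \/ (INR a <= INR c /\ INR d <= INR b) \/ (INR c <= INR a /\ INR b <= INR d)).
Proof.
move=> h1 h2; case: (darc_lam h1 h2) => [h|h|[h h']|[h h']].
- by left; apply: INR_len.
- by right; left; apply: INR_len.
- by right; right; left; split; apply: INR_len.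
- by right; right; right; split; apply: INR_len.
Qed.

Lemma RA_RA (a b c d : V) s1 s2 : RA a b -> RA c d ->
  INR a.1.2 < s1 < INR b.1.2 -> INR c.1.2 < s2 < INR d.1.2 ->
  (s1, INR a.1.1 * Hh + (s1 - INR a.1.2) * (INR b.1.2 - s1)) =
  (s2, INR c.1.1 * Hh + (s2 - INR c.1.2) * (INR d.1.2 - s2)) -> a = c /\ b = d.
Proof.
move=> hab hcd h1 h2 [es ey]; subst s2.
have [e1 e2] := RA_height hab h1; have [e3 e4] := RA_height hcd h2.
have er := strip_eq (conj (Rlt_le _ _ e1) e2) (conj (Rlt_le _ _ e3) e4) ey.
rewrite er in ey; have ey' : (s1 - INR a.1.2) * (INR b.1.2 - s1) = (s1 - INR c.1.2) * (INR d.1.2 - s1) by lra.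
case: hab => r1 l1 l2 dab; case: hcd => r2 l3 l4 dcd.
have [ea eb] := lam_real h1 h2 (lam_nat dab dcd) ey'.
have ea' := INR_eqn ea; have eb' := INR_eqn eb.
split; apply: V_eq => //; rewrite ?l1 ?l2 ?l3 ?l4 //.
by rewrite -r1 -r2.
Qed.

Lemma RT_RT (a b c d : V) y1 y2 : RT a b -> RT c d ->
  INR a.1.1 * Hh < y1 < INR b.1.1 * Hh -> INR c.1.1 * Hh < y2 < INR d.1.1 * Hh ->
  (-((y1 - INR a.1.1 * Hh) * (INR b.1.1 * Hh - y1)), y1) =
  (-((y2 - INR c.1.1 * Hh) * (INR d.1.1 * Hh - y2)), y2) -> a = c /\ b = d.
Proof.
move=> hab hcd h1 h2 [ex ey]; subst y2.
have Hp := Hh_pos m.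
have ex' : (y1 - INR a.1.1 * Hh) * (INR b.1.1 * Hh - y1) = (y1 - INR c.1.1 * Hh) * (INR d.1.1 * Hh - y1) by lra.
case: hab => c1 c2 l1 l2 dab; case: hcd => c3 c4 l3 l4 dcd.
have lam : (INR b.1.1 * Hh <= INR c.1.1 * Hh \/ INR d.1.1 * Hh <= INR a.1.1 * Hh \/
   (INR a.1.1 * Hh <= INR c.1.1 * Hh /\ INR d.1.1 * Hh <= INR b.1.1 * Hh) \/
   (INR c.1.1 * Hh <= INR a.1.1 * Hh /\ INR b.1.1 * Hh <= INR d.1.1 * Hh)).
  case: (lam_nat dab dcd) => [h|[h|[[h h']|[h h']]]].
  - by left; apply: Rmult_le_compat_r; lra.
  - by right; left; apply: Rmult_le_compat_r; lra.
  - by right; right; left; split; apply: Rmult_le_compat_r; lra.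
  - by right; right; right; split; apply: Rmult_le_compat_r; lra.
have [ea eb] := lam_real h1 h2 lam ex'.
have ea' : INR a.1.1 = INR c.1.1 by apply: (Rmult_eq_reg_r Hh); lra.
have eb' : INR b.1.1 = INR d.1.1 by apply: (Rmult_eq_reg_r Hh); lra.
have := INR_eqn ea'; have := INR_eqn eb' => f1 f2.
split; apply: V_eq => //; by rewrite ?c1 ?c2 ?c3 ?c4 ?l1 ?l2 ?l3 ?l4.
Qed.

Lemma VP_VP (a b c d : V) y1 y2 : VP a b -> VP c d ->
  hgt a < y1 < hgt b -> hgt c < y2 < hgt d ->
  (INR a.1.2, y1) = (INR c.1.2, y2) -> a = c /\ b = d.
Proof.
move=> [e1 c1] [e2 c2] h1 h2 [ex ey]; subst y2.
have ec := INR_eqn ex.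
have ec' : a.1.2 = c.1.2 by apply: val_inj.
have cc : code a = code c := code_uniq m_gt0 (y := y1) ec' (esym e1) (esym e2) c1 c2 h1 h2.
have [r1 l1] := code_inj m_gt0 cc.
have cd : code b = code d by rewrite c1 c2 cc.
have [r2 l2] := code_inj m_gt0 cd.
by split; apply: V_eq => //; rewrite -?e1 -?e2.
Qed.

Lemma RA_RT_false (a b c d : V) s y : RA a b -> RT c d ->
  INR a.1.2 < s < INR b.1.2 -> INR c.1.1 * Hh < y < INR d.1.1 * Hh ->
  s = -((y - INR c.1.1 * Hh) * (INR d.1.1 * Hh - y)) -> False.
Proof.
move=> _ _ [h1 _] [h2 h3] e; have := INR_ge0 a.1.2; nra.
Qed.

Lemma RT_VP_false (c d : V) y x : RT c d ->
  INR c.1.1 * Hh < y < INR d.1.1 * Hh -> INR x = -((y - INR c.1.1 * Hh) * (INR d.1.1 * Hh - y)) -> False.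
Proof.
move=> _ [h2 h3] e; have := INR_ge0 x; nra.
Qed.

Definition up (c : V) : V := (c.1.1, c.1.2, inord c.2.+1).
Definition cpt (c : V) : point := (INR c.1.2, INR c.1.1 * Hh + INR (kap c.1.2 c.2.+1)).
Definition Aof (c : V) : nat := (2 ^ c.2.+1 * (c.1.2 %/ 2 ^ c.2.+1))%N.
Definition arcset (c : V) : {set V} :=
  [set (c.1.1, inord (Aof c), ord0); (c.1.1, inord (Aof c + 2 ^ c.2.+1)%N, ord0)].

Lemma RA_VP (a b c d : V) s y : RA a b -> VP c d ->
  INR a.1.2 < s < INR b.1.2 -> hgt c < y < hgt d ->
  (s, INR a.1.1 * Hh + (s - INR a.1.2) * (INR b.1.2 - s)) = (INR c.1.2, y) ->
  [/\ (c.2 < m)%N, d = up c, (INR c.1.2, y) = cpt c & [set a; b] = arcset c].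
Proof.
move=> hab [ecd ccd] hs hy [es ey]; subst s.
case: hab => r1 l1 l2 dab.
have lt1 := INR_ltn' (proj1 hs); have lt2 := INR_ltn' (proj2 hs).
have [lv [lv0 lvm hk hb ha]] := kap_arc dab lt1 lt2.
have hK : (INR c.1.2 - INR a.1.2) * (INR b.1.2 - INR c.1.2) = INR (kap c.1.2 lv).
  by rewrite hk INR_muln !INR_subn //; apply: ltnW.
have kp : (0 < kap c.1.2 lv)%N by rewrite hk muln_gt0 !subn_gt0 lt1 lt2.
have [sc1 sc2] := sig_cross m_gt0 lv0 lvm kp.
have lvm' : (lv.-1 < m.+1)%N by lia.
have lvm'' : (lv < m.+1)%N by lia.
pose L : V := (a.1.1, c.1.2, inord lv.-1).
pose U : V := (a.1.1, c.1.2, inord lv).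
have cLU : code U = (code L).+1 by rewrite /code /= !inordK //; lia.
have hyL : hgt L < y < hgt U.
  by rewrite /hgt /= !inordK // -ey hK; split; lra.
have cc : code c = code L := code_uniq m_gt0 (u := c) (v := d) (u' := L) (v' := U) (y := y) erefl (esym ecd) erefl ccd cLU hy hyL.
have [r2 l3] := code_inj m_gt0 cc.
rewrite /= inordK // in r2 l3.
have cm : (c.2 < m)%N by rewrite l3; lia.
have [r3 l4] : d.1.1 = U.1.1 :> nat /\ d.2 = U.2 :> nat by apply: (code_inj m_gt0); rewrite ccd cc cLU.
rewrite /= inordK // in r3 l4.
have l3' : (c.2).+1 = lv by rewrite l3; lia.
split => //.
- apply: V_eq => /=; rewrite ?inordK; [by rewrite r3 r2|by rewrite ecd|by rewrite l4 l3'|by rewrite l3'].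

- by rewrite /cpt l3' -ey hK r2.
- rewrite /arcset /Aof l3' ha -hb.
  have ea : a = (c.1.1, inord a.1.2, ord0).
    by apply: V_eq => //=; rewrite ?inordK ?l1 ?r2 //; rewrite ltnS -ltnS ltn_ord.
  have eb : b = (c.1.1, inord b.1.2, ord0).
    by apply: V_eq => //=; rewrite ?inordK ?l2 ?r2 -?r1 //; rewrite ltnS -ltnS ltn_ord.
  by rewrite [in LHS]ea [in LHS]eb.
Qed.

End Geo3.

Open Scope R_scope.

Section Geo4.
Variable m : nat.
Hypothesis m_gt0 : (0 < m)%N.
Local Notation n := (2 ^ m)%N.
Local Notation V := (V m).
Local Notation adj := (@adj m).
Local Notation posv := (@posv m).
Local Notation hgt := (@hgt m).
Local Notation code := (@code m).
Local Notation Hh := (Hh m).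
Local Notation curv := (@curv m).
Local Notation RA := (@RA m).
Local Notation RT := (@RT m).
Local Notation VP := (@VP m).

Definition desc (a b : V) (p : point) : Prop :=
  (RA a b /\ exists s, INR a.1.2 < s < INR b.1.2 /\
      p = (s, INR a.1.1 * Hh + (s - INR a.1.2) * (INR b.1.2 - s))) \/
  (RT a b /\ exists y, INR a.1.1 * Hh < y < INR b.1.1 * Hh /\
      p = (-((y - INR a.1.1 * Hh) * (INR b.1.1 * Hh - y)), y)) \/
  (VP a b /\ exists y, hgt a < y < hgt b /\ p = (INR a.1.2, y)).

Lemma desc_t (a b : V) t : (RA a b \/ RT a b \/ VP a b) -> 0 < t < 1 -> desc a b (curv a b t).
Proof.
move=> [h|[h|h]] ht.
- left; split => //; have [s [hs e]] := pt_RA h ht; by exists s; rewrite e.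
- right; left; split => //; have [y [hy e]] := pt_RT h ht; by exists y; rewrite e.
- right; right; split => //; have [y [hy e]] := pt_VP m_gt0 h ht; by exists y; rewrite e.
Qed.

Lemma edge_desc u v p : adj u v -> on_edge curv u v p -> p <> posv u -> p <> posv v ->
  exists a b, [set a; b] = [set u; v] /\ desc a b p.
Proof.
move=> huv hon pu pv.
have [a [b [hor hk]]] := adj_canon m_gt0 huv.
have [hon' pa pb seteq] : [/\ on_edge curv a b p, p <> posv a, p <> posv b & [set a; b] = [set u; v]].
  case: hor => [[-> ->]|[-> ->]]; first by split.
  by split => //; [apply: on_edge_sym | rewrite setUC].
have [t [ht e]] := interior hon' pa pb.
by exists a, b; split => //; rewrite -e; apply: desc_t.
Qed.

Definition crossing_pts (u v x y : V) p := crossing adj posv curv p u v x y.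

Lemma cross_class p u v x y : crossing adj posv curv p u v x y ->
  (exists c : V, [/\ (c.2 < m)%N, [set x; y] = [set c; up c], p = cpt c & [set u; v] = arcset c]) \/
  (exists c : V, [/\ (c.2 < m)%N, [set u; v] = [set c; up c], p = cpt c & [set x; y] = arcset c]).
Proof.
move=> [euv [exy [neq [on1 [on2 [p1 [p2 [p3 p4]]]]]]]].
have [a [b [sab dab]]] := edge_desc euv on1 p1 p2.
have [c [d [scd dcd]]] := edge_desc exy on2 p3 p4.
have neq' : [set a; b] <> [set c; d] by rewrite sab scd.
case: dab => [[hab [s [hs ep]]]|[[hab [y1 [hy1 ep]]]|[hab [y1 [hy1 ep]]]]];
case: dcd => [[hcd [s' [hs' ep']]]|[[hcd [y2 [hy2 ep']]]|[hcd [y2 [hy2 ep']]]]];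
  have {}ep := etrans (esym ep) ep'.
- by exfalso; have [e1 e2] := RA_RA hab hcd hs hs' ep; apply: neq'; rewrite e1 e2.
- by exfalso; case: ep => ep _; apply: (RA_RT_false hab hcd hs hy2 ep).
- left; have [h1 h2 h3 h4] := RA_VP m_gt0 hab hcd hs hy2 ep.
  exists c; split; [exact: h1|by rewrite -scd h2|by rewrite ep'|by rewrite -sab].
- by exfalso; case: ep => ep _; apply: (RA_RT_false hcd hab hs' hy1 (esym ep)).
- by exfalso; have [e1 e2] := RT_RT hab hcd hy1 hy2 ep; apply: neq'; rewrite e1 e2.
- by exfalso; case: ep => ep _; apply: (RT_VP_false (x := c.1.2) hab hy1 (esym ep)).
- right; have [h1 h2 h3 h4] := RA_VP m_gt0 hcd hab hs' hy1 (esym ep).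
  exists a; split; [exact: h1|by rewrite -sab h2|by rewrite ep' -ep|by rewrite -scd].
- by exfalso; case: ep => ep _; apply: (RT_VP_false (x := a.1.2) hcd hy2 ep).
- by exfalso; have [e1 e2] := VP_VP m_gt0 hab hcd hy1 hy2 ep; apply: neq'; rewrite e1 e2.
Qed.


Lemma posv_inj : injective posv.
Proof.
move=> u w; rewrite /posv => -[ex ey].
have ec : u.1.2 = w.1.2 by apply: val_inj; apply: INR_eqn.
case: (ltngtP (code u) (code w)) => h.
- by have := hgt_mono m_gt0 ec h; lra.
- by have := hgt_mono m_gt0 (esym ec) h; lra.
- have [r l] := code_inj m_gt0 h; apply: V_eq => //; by rewrite ec.
Qed.

Lemma no_vertex u v t w : adj u v -> 0 < t < 1 -> curv u v t <> posv w.
Proof.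
move=> huv ht.
have [a [b [hor hk]]] := adj_canon m_gt0 huv.
have [t' [ht' ->]] : exists t', 0 < t' < 1 /\ curv u v t = curv a b t'.
  case: hor => [[-> ->]|[-> ->]]; first by exists t.
  by exists (1 - t); split; [lra|rewrite curv_sym].
have := desc_t hk ht'; set p := curv a b t'.
move=> [[hab [s [hs ep]]]|[[hab [y [hy ep]]]|[hab [y [hy ep]]]]] e; rewrite ep /posv in e; case: e => ex ey.
- have [e1 e2] := RA_height hab hs.
  rewrite ex in hs ey e1 e2.
  have lt1 := INR_ltn' (proj1 hs); have lt2 := INR_ltn' (proj2 hs).
  have hs0 : 0 <= sig m w.1.2 w.2 by apply: sig_ge0.
  have hs1 : sig m w.1.2 w.2 < Hh by apply: sig_ltH => //; rewrite -ltnS.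
  rewrite /hgt in ey.
  have er := strip_eq (conj (Rlt_le _ _ e1) e2) (conj hs0 hs1) ey.
  rewrite er in ey.
  have eK : sig m w.1.2 w.2 = INR ((w.1.2 - a.1.2) * (b.1.2 - w.1.2))%N.
    rewrite INR_muln !INR_subn; [lra|exact: ltnW|exact: ltnW].
  have l0 := sig_nat m_gt0 (ltn_ord w.2) eK.
  move: eK e1; rewrite l0 sig0 => eK e1.
  rewrite INR_muln !INR_subn in eK; [lra|exact: ltnW|exact: ltnW].
- have := INR_ge0 w.1.2; rewrite -ex; nra.
- case: hab => ec cc.
  have ecw : a.1.2 = w.1.2 by apply: val_inj; apply: INR_eqn.
  rewrite ey in hy.
  by apply: (code_between m_gt0 ecw (etrans (esym ec) ecw) cc (proj1 hy) (proj2 hy)).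
Qed.

Lemma emb : embedding adj posv curv.
Proof.
split; first exact: posv_inj.
move=> u v huv; split; first exact: curv_cont1.
split; first exact: curv_cont2.
split; first exact: curv0.
split; first exact: curv1.
split; first by move=> t; rewrite curv_sym.
by move=> t w ht; apply: no_vertex.
Qed.

Definition chg (E : {set V}) : seq (point * {set V}) :=
  if [pick P : V | (P.2 < m)%N && ([set P; up P] == E)] is Some P then [:: (cpt P, arcset P)] else [::].

Lemma up_set_inj (P c : V) : (P.2 < m)%N -> (c.2 < m)%N -> [set P; up P] = [set c; up c] -> P = c.
Proof.
move=> hP hc e.
have hPm : (P.2.+1 < m.+1)%N by [].
have hcm : (c.2.+1 < m.+1)%N by [].
have : P \in [set c; up c] by rewrite -e !inE eqxx.
rewrite !inE => /orP [/eqP // | /eqP eP].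
have : up P \in [set c; up c] by rewrite -e !inE eqxx orbT.
rewrite !inE => /orP [/eqP e1|/eqP e1].
- have := congr1 (fun v : V => nat_of_ord v.2) e1; rewrite /= inordK //.
  have := congr1 (fun v : V => nat_of_ord v.2) eP; rewrite /= inordK //; lia.
- have h1 : P.2.+1 = c.2.+1 :> nat.
    by have := congr1 (fun v : V => nat_of_ord v.2) e1; rewrite /= !inordK.
  have := congr1 (fun v : V => nat_of_ord v.2) eP; rewrite /= inordK //; lia.
Qed.

Lemma chg_piece (c : V) : (c.2 < m)%N -> chg [set c; up c] = [:: (cpt c, arcset c)].
Proof.
move=> hc; rewrite /chg; case: pickP => [P /andP [hP /eqP eP]|none].
  by rewrite (up_set_inj hP hc eP).
by have := none c; rewrite hc eqxx.
Qed.

Lemma gap : gap_planar_embedding adj 1 posv curv.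
Proof.
exists chg; split.
  by move=> E; rewrite /chg; case: pickP.
move=> p u v x y hc.
case: (cross_class hc) => [[c [h1 h2 h3 h4]]|[c [h1 h2 h3 h4]]].
- by right; rewrite h2 chg_piece // h3 h4; left.
- by left; rewrite h2 chg_piece // h3 h4; left.
Qed.

End Geo4.

Close Scope R_scope.

Lemma expn_pow (k : nat) : (2 ^ k)%N = Nat.pow 2 k.
Proof. elim: k => [|k IH] //; by rewrite expnS IH /= mulnE. Qed.

Theorem theorem42 :
  exists c : R, Rlt R0 c /\
    forall N : nat, exists r : nat, (N <= r)%N /\ (1 <= r)%N /\
      exists (T : finType) (e : rel T),
        simple_graph e /\ gap_planar e 1 /\ radius_le e r /\
        treewidth_ge e (Rpower (INR 2) (Rmult c (INR r))).
Proof.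
exists (Rinv (INR 4)); split.
  by apply: Rinv_0_lt_compat; apply: lt_0_INR; apply/ltP.
move=> N; pose m := N.+1.
have m_gt0 : (0 < m)%N by [].
exists (4 * m)%N; split; first lia.
split; first lia.
exists (V m), (@adj m); split; first by split; [exact: adj_sym | exact: adj_irr].
split; first by exists (@posv m), (@curv m); split; [exact: emb | exact: gap].
split.
  have [c hc] := radius_ok m_gt0; exists c => w.
  have [p [hs hp]] := hc w; exists p; split => //; apply: (leq_trans hs); lia.
move=> I t B td.
have hw := tw_ok m_gt0 td.
have e1 : Rmult (Rinv (INR 4)) (INR (4 * m)) = INR m.
  rewrite mult_INR -Rmult_assoc Rinv_l ?Rmult_1_l //; exact: not_0_INR.
rewrite e1 Rpower_pow; last by apply: lt_0_INR; apply/ltP.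
rewrite -pow_INR -expn_pow.
by apply: le_INR; apply/leP.
Qed.
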